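(* Let $\mathcal{H}$ be a complex Hilbert space, let $N(\cdot)$ be a weakly unitarily invariant self-adjoint algebra norm on $\mathbb{B}(\mathcal{H})$, and let $T\in\mathbb{B}(\mathcal{H})$ with $\|T\|\le 1$. Then $$w_{N}(TT^* - T^*T) \leq 4N(T)\sup_{U\in\mathcal{U}}N(U).$$
   Context: $\mathbb{B}(\mathcal{H})$ is the algebra of bounded linear operators on $\mathcal{H}$, $\|\cdot\|$ the usual operator norm, and $\mathcal{U}$ the group of unitary operators in $\mathbb{B}(\mathcal{H})$. A norm $N(\cdot)$ on $\mathbb{B}(\mathcal{H})$ is an algebra norm if $N(TS)\le N(T)N(S)$ for all $T,S$; self-adjoint if $N(T^* )=N(T)$ for all $T$; weakly unitarily invariant if $N(U^*TU)=N(T)$ for all $T\in\mathbb{B}(\mathcal{H})$, $U\in\mathcal{U}$. For $A\in\mathbb{B}(\mathcal{H})$, ${\rm Re}(A)=\frac{A+A^*}{2}$. The generalized numerical radius is $w_N(T)=\sup_{\theta\in\mathbb{R}} N\big({\rm Re}(e^{i\theta}T)\big)$. *)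

(* Defs.v *)
From HB Require Import structures.
From mathcomp Require Import all_boot all_order all_algebra.
From mathcomp Require Import all_classical all_reals all_analysis.
From mathcomp Require Import complex.
From Stdlib Require Import ClassicalEpsilon.
Set Implicit Arguments. Unset Strict Implicit. Unset Printing Implicit Defensive.
Import Order.TTheory GRing.Theory Num.Theory.
Local Open Scope ring_scope.

Section Hilbert.
Variables (R : realType) (V : lmodType R[i]) (ip : V -> V -> R[i]).

Definition is_inner_product : Prop :=
  [/\ (forall (a : R[i]) x y z, ip (a *: x + y) z = a * ip x z + ip y z),
      (forall x y, ip x y = conjc (ip y x)),
      (forall x, 0 <= complex.Re (ip x x) /\ complex.Im (ip x x) = 0) &
      (forall x, ip x x = 0 -> x = 0)].

Definition hnorm (x : V) : R := Num.sqrt (complex.Re (ip x x)).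

Definition hcomplete : Prop :=
  forall u : nat -> V,
    (forall e : R, 0 < e -> exists M : nat, forall m n : nat,
        (M <= m)%N -> (M <= n)%N -> hnorm (u m - u n) < e) ->
    exists l : V, forall e : R, 0 < e -> exists M : nat, forall n : nat,
        (M <= n)%N -> hnorm (u n - l) < e.

Definition bounded_op (T : V -> V) : Prop :=
  (forall (a : R[i]) x y, T (a *: x + y) = a *: T x + T y) /\
  exists M : R, forall x, hnorm (T x) <= M * hnorm x.

Definition opnorm (T : V -> V) : R :=
  sup [set hnorm (T x) | x in [set x | hnorm x <= 1]].

Definition is_adjoint (T S : V -> V) : Prop :=
  forall x y, ip (T x) y = ip x (S y).

Definition adj (T : V -> V) : V -> V :=
  epsilon (inhabits (fun x : V => x)) (is_adjoint T).

Definition opadd (T S : V -> V) : V -> V := fun x => T x + S x.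
Definition opscale (a : R[i]) (T : V -> V) : V -> V := fun x => a *: T x.
Definition opsub (T S : V -> V) : V -> V := fun x => T x - S x.

Definition unitary (U : V -> V) : Prop :=
  bounded_op U /\ adj U \o U = id /\ U \o adj U = id.

Definition ReOp (A : V -> V) : V -> V := opscale (2^-1) (opadd A (adj A)).

Definition is_op_norm (N : (V -> V) -> R) : Prop :=
  [/\ (forall T, bounded_op T -> 0 <= N T),
      (forall T, bounded_op T -> N T = 0 -> T = (fun _ => 0)),
      (forall a T, bounded_op T -> N (opscale a T) = Normc.normc a * N T) &
      (forall T S, bounded_op T -> bounded_op S -> N (opadd T S) <= N T + N S)].

Definition algebra_norm (N : (V -> V) -> R) : Prop :=
  is_op_norm N /\
  forall T S, bounded_op T -> bounded_op S -> N (T \o S) <= N T * N S.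

Definition selfadjoint_norm (N : (V -> V) -> R) : Prop :=
  forall T, bounded_op T -> N (adj T) = N T.

Definition weakly_unitarily_invariant (N : (V -> V) -> R) : Prop :=
  forall T U, bounded_op T -> unitary U -> N (adj U \o T \o U) = N T.

Definition expi (t : R) : R[i] := (cos t +i* sin t)%C.

Definition wN (N : (V -> V) -> R) (T : V -> V) : \bar R :=
  ereal_sup [set (N (ReOp (opscale (expi t) T)))%:E | t in [set: R]].

Definition sup_unitary (N : (V -> V) -> R) : \bar R :=
  ereal_sup [set (N U)%:E | U in unitary].

End Hilbert.

(* Main.v *)
Require Import Defs.
From HB Require Import structures.
From mathcomp Require Import all_boot all_order all_algebra.
From mathcomp Require Import all_classical all_reals all_analysis.
From mathcomp Require Import complex.
From mathcomp Require Import ring lra.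
From Stdlib Require Import ClassicalEpsilon.
Set Implicit Arguments. Unset Strict Implicit. Unset Printing Implicit Defensive.
Import Order.TTheory GRing.Theory Num.Theory.
Local Open Scope complex_scope.
Local Open Scope ring_scope.

Section P1.
Variables (R : realType) (V : lmodType R[i]) (ip : V -> V -> R[i]).
Hypothesis Hip : is_inner_product ip.
Local Notation nrm := (hnorm ip).
Local Notation normc := Normc.normc.
Local Notation Re := complex.Re.
Local Notation Im := complex.Im.

Lemma ipL a x y z : ip (a *: x + y) z = a * ip x z + ip y z.
Proof. have [h _ _ _] := Hip. exact: h. Qed.
Lemma ipC x y : ip x y = (ip y x)^*%R.
Proof. have [_ h _ _] := Hip. exact: h. Qed.
Lemma ipP x : 0 <= Re (ip x x) /\ Im (ip x x) = 0.
Proof. have [_ _ h _] := Hip. exact: h. Qed.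
Lemma ipdef x : ip x x = 0 -> x = 0.
Proof. have [_ _ _ h] := Hip. exact: h. Qed.

Lemma ip_self x : ip x x = ((nrm x) ^+ 2)%:C.
Proof.
have [h1 h2] := ipP x; rewrite /hnorm sqr_sqrtr //.
by move: h1 h2; case: (ip x x) => a b /= _ ->.
Qed.

Lemma nrm_ge0 x : 0 <= nrm x.
Proof. exact: sqrtr_ge0. Qed.

Lemma ip0l z : ip 0 z = 0.
Proof.
have := ipL 1 0 0 z; rewrite scaler0 addr0 mul1r => h.
by have := congr1 (fun t => t - ip 0 z) h; rewrite subrr addrK.
Qed.

Lemma ipDl x y z : ip (x + y) z = ip x z + ip y z.
Proof. by have := ipL 1 x y z; rewrite scale1r mul1r. Qed.

Lemma ipZl a x z : ip (a *: x) z = a * ip x z.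
Proof. by have := ipL a x 0 z; rewrite addr0 ip0l addr0. Qed.

Lemma ipNl x z : ip (- x) z = - ip x z.
Proof. by rewrite -scaleN1r ipZl mulN1r. Qed.

Lemma ipBl x y z : ip (x - y) z = ip x z - ip y z.
Proof. by rewrite ipDl ipNl. Qed.

Lemma ip0r z : ip z 0 = 0.
Proof. by rewrite ipC ip0l rmorph0. Qed.

Lemma ipDr x y z : ip x (y + z) = ip x y + ip x z.
Proof. by rewrite ipC ipDl rmorphD /= -!ipC. Qed.

Lemma ipZr a x z : ip x (a *: z) = a^*%R * ip x z.
Proof. by rewrite ipC ipZl rmorphM /= -ipC. Qed.

Lemma ipNr x z : ip x (- z) = - ip x z.
Proof. by rewrite -scaleN1r ipZr rmorphN /= rmorph1 mulN1r. Qed.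

Lemma ipBr x y z : ip x (y - z) = ip x y - ip x z.
Proof. by rewrite ipDr ipNr. Qed.

Lemma nrm_eq0 x : nrm x = 0 -> x = 0.
Proof. by move=> h; apply: ipdef; rewrite ip_self h expr0n. Qed.

Lemma nrm0 : nrm 0 = 0.
Proof. by rewrite /hnorm ip0l sqrtr0. Qed.

Lemma nrmE u r : 0 <= r -> ip u u = (r ^+ 2)%:C -> nrm u = r.
Proof. by move=> r0 h; rewrite /hnorm h /= sqrtr_sqr ger0_norm. Qed.

Lemma Re_real (r : R) : Re (r%:C) = r.
Proof. by []. Qed.

Lemma nrmD2 x y : nrm (x + y) ^+ 2 = nrm x ^+ 2 + nrm y ^+ 2 + 2 * Re (ip x y).
Proof.
have e : ip (x+y) (x+y) = ip x x + ip y y + (ip x y + (ip x y)^*%R).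
  by rewrite !ipDl !ipDr [ip y x]ipC; ring.
move: e; rewrite !ip_self; case: (ip x y) => a b /=; simpc.
by case=> ->; ring.
Qed.

Lemma conjE (z : R[i]) : z^*%R = conjc z.
Proof. by []. Qed.

Lemma conj_real (r : R) : (r%:C)^*%R = r%:C.
Proof. by rewrite conjE /= oppr0. Qed.

Lemma Re_rM (r : R) (z : R[i]) : Re (r%:C * z) = r * Re z.
Proof. by case: z => a b /=; ring. Qed.

Lemma normc_ge0 (a : R[i]) : 0 <= normc a.
Proof. by case: a => ? ?; exact: sqrtr_ge0. Qed.

Lemma mulcJ (a : R[i]) : a * a^*%R = ((normc a) ^+ 2)%:C.
Proof. by rewrite -normCK /= rmorphXn. Qed.

Lemma normcJ' (a : R[i]) : normc (a^*%R) = normc a.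
Proof. by case: a => p q /=; rewrite sqrrN. Qed.

Lemma normcR2 (r : R) : normc (r%:C) ^+ 2 = r ^+ 2.
Proof. by rewrite /= expr0n addr0 sqr_sqrtr // sqr_ge0. Qed.

Lemma nrmZ a x : nrm (a *: x) = normc a * nrm x.
Proof.
apply: nrmE; first by rewrite mulr_ge0 ?normc_ge0 ?nrm_ge0.
by rewrite ipZl ipZr mulrA mulcJ ip_self -rmorphM exprMn.
Qed.

Lemma CS_Re x y : Re (ip x y) <= nrm x * nrm y.
Proof.
have [/nrm_eq0 ->|nx] := eqVneq (nrm x) 0; first by rewrite ip0l /= nrm0 mul0r.
have [/nrm_eq0 ->|ny] := eqVneq (nrm y) 0; first by rewrite ip0r /= nrm0 mulr0.
have nx0 : 0 < nrm x by rewrite lt_def nx nrm_ge0.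
have ny0 : 0 < nrm y by rewrite lt_def ny nrm_ge0.
have h := nrmD2 ((nrm y)%:C *: x) ((- nrm x)%:C *: y).
rewrite !nrmZ ipZl ipZr conj_real Re_rM Re_rM !exprMn !normcR2 in h.
have h0 := sqr_ge0 (nrm ((nrm y)%:C *: x + (- nrm x)%:C *: y)).
have p0 : 0 < nrm x * nrm y by rewrite mulr_gt0.
rewrite h in h0; nra.
Qed.

Lemma CS x y : normc (ip x y) <= nrm x * nrm y.
Proof.
have h := CS_Re ((ip x y)^*%R *: x) y.
rewrite ipZl mulrC mulcJ Re_real nrmZ normcJ' in h.
have := normc_ge0 (ip x y); have := mulr_ge0 (nrm_ge0 x) (nrm_ge0 y).
rewrite -mulrA in h; move: h.
set m := nrm x * nrm y; set n := normc _.
nra.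
Qed.

Lemma nrm_triangle x y : nrm (x + y) <= nrm x + nrm y.
Proof.
have h := nrmD2 x y; have := CS_Re x y.
have := nrm_ge0 x; have := nrm_ge0 y; have := nrm_ge0 (x + y).
nra.
Qed.

Lemma ip_eqr u v : (forall z, ip z u = ip z v) -> u = v.
Proof.
move=> h; apply/eqP; rewrite -subr_eq0; apply/eqP/ipdef.
by rewrite ipBr h subrr.
Qed.

Lemma ip_eql u v : (forall z, ip u z = ip v z) -> u = v.
Proof.
move=> h; apply/eqP; rewrite -subr_eq0; apply/eqP/ipdef.
by rewrite ipBl h subrr.
Qed.

End P1.

Section P2.
Variables (R : realType) (V : lmodType R[i]) (ip : V -> V -> R[i]).
Hypothesis Hip : is_inner_product ip.
Local Notation nrm := (hnorm ip).
Local Notation normc := Normc.normc.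
Local Notation Re := complex.Re.
Local Notation Im := complex.Im.

Lemma normcD (x y : R[i]) : normc (x + y) <= normc x + normc y.
Proof. exact: (@le_normcD R x y). Qed.

Lemma normcN' (x : R[i]) : normc (- x) = normc x.
Proof. exact: (@normcN R x). Qed.

Lemma normcM' (x y : R[i]) : normc (x * y) = normc x * normc y.
Proof. exact: Normc.normcM. Qed.

Lemma normc_real (r : R) : 0 <= r -> normc (r%:C) = r.
Proof. by move=> r0; rewrite /= expr0n addr0 sqrtr_sqr ger0_norm. Qed.

Lemma normc_eq0 (x : R[i]) : normc x = 0 -> x = 0.
Proof. exact: Normc.eq0_normc. Qed.

Lemma nrmN x : nrm (- x) = nrm x.
Proof. by rewrite -scaleN1r (nrmZ Hip) normcN' Normc.normc1 mul1r. Qed.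

Lemma nrmB x y : nrm (x - y) = nrm (y - x).
Proof. by rewrite -nrmN opprB. Qed.

Lemma small_le0 (a : R) : (forall e, 0 < e -> a <= e) -> a <= 0.
Proof. by move=> h; apply/ler_addgt0Pr => e e0; rewrite add0r h. Qed.

Lemma le_eps (a b : R) : (forall e : R, 0 < e -> a <= b + e) -> a <= b.
Proof. by move=> h; apply/ler_addgt0Pr => e e0; apply: h. Qed.

Lemma arch (e : R) : 0 < e -> exists M : nat, forall n, (M <= n)%N -> (n.+1%:R)^-1 < e.
Proof.
move=> e0; exists (Num.Def.truncn (e^-1)) => n hn.
have h1 := truncnS_gt (e^-1).
have h2 : (Num.Def.truncn e^-1).+1%:R <= n.+1%:R :> R by rewrite ler_nat ltnS.
have h3 : e^-1 < n.+1%:R by apply: lt_le_trans h2.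
rewrite -[e]invrK ltf_pV2 ?posrE ?invr_gt0 //.
Qed.

Definition cvgH (u : nat -> V) (l : V) :=
  forall e : R, 0 < e -> exists M, forall n, (M <= n)%N -> nrm (u n - l) < e.

Definition cauchyH (u : nat -> V) :=
  forall e : R, 0 < e -> exists M, forall m n, (M <= m)%N -> (M <= n)%N ->
    nrm (u m - u n) < e.

Hypothesis Hcomplete : hcomplete ip.

Lemma cauchy_cvgH u : cauchyH u -> exists l, cvgH u l.
Proof. exact: Hcomplete. Qed.

Lemma cvg_uniqueH u l1 l2 : cvgH u l1 -> cvgH u l2 -> l1 = l2.
Proof.
move=> h1 h2; apply/eqP; rewrite -subr_eq0; apply/eqP/(nrm_eq0 Hip).
apply/le_anti; rewrite nrm_ge0 andbT; apply: small_le0 => e e0.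
have e2 : 0 < e / 2 by rewrite divr_gt0.
have [M1 hM1] := h1 _ e2; have [M2 hM2] := h2 _ e2.
have := hM1 (maxn M1 M2) (leq_maxl _ _); have := hM2 (maxn M1 M2) (leq_maxr _ _).
set u0 := u (maxn M1 M2) => a b.
have : nrm (l1 - l2) <= nrm (l1 - u0) + nrm (u0 - l2).
  by have := nrm_triangle Hip (l1 - u0) (u0 - l2); rewrite addrA subrK.
rewrite [nrm (l1 - u0)]nrmB; lra.
Qed.

Lemma mulJc (a : R[i]) : conjc a * a = ((normc a) ^+ 2)%:C.
Proof. by rewrite mulrC -conjE mulcJ. Qed.

Lemma ReN (z : R[i]) : Re (- z) = - Re z.
Proof. by case: z. Qed.

Lemma parallelogram u v :
  nrm (u - v) ^+ 2 + nrm (u + v) ^+ 2 = 2 * nrm u ^+ 2 + 2 * nrm v ^+ 2.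
Proof. rewrite !(nrmD2 Hip) nrmN (ipNr Hip) ReN; ring. Qed.

Lemma riesz (phi : V -> R[i]) (Mp : R) :
  (forall a x y, phi (a *: x + y) = a * phi x + phi y) ->
  (forall x, normc (phi x) <= Mp * nrm x) ->
  exists z, forall x, phi x = ip x z.
Proof.
move=> lin bnd.
have phi0 : phi 0 = 0.
  have := lin 1 0 0; rewrite scaler0 addr0 mul1r => h.
  by have := congr1 (fun t => t - phi 0) h; rewrite subrr addrK.
have phiZ a x : phi (a *: x) = a * phi x by rewrite -[a *: x]addr0 lin phi0 addr0.
have phiD x y : phi (x + y) = phi x + phi y by have := lin 1 x y; rewrite scale1r mul1r.
have phiN x : phi (- x) = - phi x by rewrite -scaleN1r phiZ mulN1r.
have phiB x y : phi (x - y) = phi x - phi y by rewrite phiD phiN.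
case: (pselect (exists x0, phi x0 != 0)) => [[x0 nz]|hn]; last first.
  exists 0 => x; rewrite (ip0r Hip).
  by case: (eqVneq (phi x) 0) => // nzx; exfalso; apply: hn; exists x.
pose Mq : R := `|Mp| + 1.
have Mq0 : 0 < Mq by rewrite /Mq ltr_wpDl.
have bnd' x : normc (phi x) <= Mq * nrm x.
  apply: (le_trans (bnd x)); apply: ler_wpM2r; first exact: nrm_ge0.
  by rewrite /Mq (le_trans (ler_norm Mp)) // lerDl.
pose K : set V := fun k => phi k = 0.
pose S : set R := fun r => exists2 k : V, K k & nrm (x0 - k) = r.
have S0 : S (nrm x0) by exists 0; rewrite ?subr0.
have Slb : lbound S 0 by move=> _ [k _ <-]; exact: nrm_ge0.
have hinf : has_inf S by split; [exists (nrm x0) | exists 0].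
pose d := inf S.
have dle k : K k -> d <= nrm (x0 - k) by move=> Kk; have := ge_inf hinf.2; apply; exists k.
have d0 : 0 <= d by apply: lb_le_inf => //; exists (nrm x0).
have seq n : exists k, K k /\ nrm (x0 - k) < d + (n.+1%:R)^-1.
  have [_ [k Kk <-] lt] := @inf_adherent R S (n.+1%:R^-1) ltac:(by []) hinf.
  by exists k.
case: (boolp.choice seq) => ks hks.
have Kmid m n : K ((2^-1) *: (ks m + ks n)).
  by rewrite /K phiZ phiD (hks m).1 (hks n).1 addr0 mulr0.
have dinv n : 0 < (n.+1%:R : R)^-1 <= 1.
  by rewrite invr_gt0 ltr0n /= invf_le1 // ?ler1n ?ltr0n.
have cauchy : cauchyH ks.
  move=> e e0.
  pose c := 4 * (2 * d + 1).
  have c0 : 0 < c by rewrite /c; lra.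
  have [M hM] := arch (divr_gt0 (exprn_gt0 2 e0) c0).
  exists M => m n hm hn.
  have bnd2 j : (M <= j)%N -> nrm (x0 - ks j) ^+ 2 < d ^+ 2 + e ^+ 2 / 4.
    move=> hj; have := hM j hj; rewrite ltr_pdivlMr // => h1.
    have [h2 h3] := andP (dinv j); have := (hks j).2; have := dle _ (hks j).1.
    have h4 : 0 <= nrm (x0 - ks j) by exact: nrm_ge0.
    set a := nrm _; set dl := (j.+1%:R)^-1 => h5 h6.
    have h7 : a ^+ 2 < (d + dl) ^+ 2 by nra.
    rewrite -/dl in h1 h2 h3; have h8 : dl * (2 * d + dl) <= dl * (2 * d + 1) by rewrite ler_pM2l //; lra.
    have h9 : (d + dl) ^+ 2 = d ^+ 2 + dl * (2 * d + dl) by ring.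
    rewrite h9 in h7; rewrite mulrCA in h1; move: h1 h7 h8.
    set q := dl * (2 * d + 1); set r := dl * (2 * d + dl); lra.
  have P := parallelogram (x0 - ks m) (x0 - ks n).
  have eq1 : x0 - ks m + (x0 - ks n) = 2%:R *: (x0 - (2^-1) *: (ks m + ks n)).
    rewrite scalerBr scalerA mulfV ?scale1r; last by rewrite pnatr_eq0.
    by rewrite scaler_nat mulr2n opprD addrACA.
  have eq2 : x0 - ks m - (x0 - ks n) = ks n - ks m by rewrite opprB addrC addrA subrK.
  have n2 : normc (2%:R : R[i]) = 2 by have := @normcMn R 1 2; rewrite Normc.normc1.
  rewrite eq1 eq2 (nrmZ Hip) n2 in P.
  have := dle _ (Kmid m n).
  rewrite [nrm (ks m - ks n)]nrmB.
  move: P (bnd2 m hm) (bnd2 n hn).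
  set A := nrm (ks n - ks m); set B := nrm (x0 - _ *: _) => h3 h1 h2 h4.
  have hA : 0 <= A by exact: nrm_ge0.
  have hB : d ^+ 2 <= B ^+ 2 by rewrite ler_sqr ?nnegrE // (le_trans d0 h4).
  have hA2 : A ^+ 2 < e ^+ 2 by nra.
  by rewrite -(ltr_pXn2r (n := 2)) // ?nnegrE ?(ltW e0).
have [k hk] := cauchy_cvgH cauchy.
have Kk : K k.
  apply: normc_eq0; apply/le_anti; rewrite normc_ge0 andbT; apply: small_le0 => e e0.
  have [M hM] := hk (e / Mq) (divr_gt0 e0 Mq0).
  have := hM M (leqnn M); have := bnd' (ks M - k).
  rewrite phiB (hks M).1 sub0r normcN' ltr_pdivlMr // => h1 h2.
  nra.
have wle : nrm (x0 - k) <= d.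
  apply: le_eps => e e0.
  have e2 : 0 < e / 2 by rewrite divr_gt0.
  have [M1 hM1] := hk (e / 2) e2; have [M2 hM2] := arch e2.
  have := hM1 (maxn M1 M2) (leq_maxl _ _); have := hM2 (maxn M1 M2) (leq_maxr _ _).
  have := (hks (maxn M1 M2)).2.
  have := nrm_triangle Hip (x0 - ks (maxn M1 M2)) (ks (maxn M1 M2) - k).
  rewrite addrA subrK; set N := maxn M1 M2; set a1 := nrm (x0 - ks N); set a2 := nrm (ks N - k); set dl := (N.+1%:R)^-1; lra.
pose w := x0 - k.
have phiw : phi w = phi x0 by rewrite phiB Kk subr0.
have wnz : ip w w != 0.
  apply/eqP => /(ipdef Hip) w0; move: nz; by rewrite -phiw w0 phi0 eqxx.
have orth k' : K k' -> ip k' w = 0.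
  move=> Kk'.
  suff p0 : ip w k' = 0 by rewrite (ipC Hip) p0 rmorph0.
  apply: normc_eq0.
  set p := ip w k'; set np := normc p; set nk := nrm k'.
  pose t := (nk ^+ 2 + 1)^-1.
  have t0 : 0 < t by rewrite /t invr_gt0; have := sqr_ge0 nk; lra.
  have tk : t * nk ^+ 2 < 1.
    by rewrite /t mulrC ltr_pdivrMr; [lra | have := sqr_ge0 nk; lra].
  pose lam := (t%:C * p).
  have Kl : K (k + lam *: k') by rewrite /K phiD phiZ Kk Kk' mulr0 addr0.
  have := dle _ Kl; rewrite opprD addrA -/w.
  have e2 := nrmD2 Hip w (- (lam *: k')).
  rewrite nrmN (nrmZ Hip) (ipNr Hip) (ipZr Hip) /lam rmorphM /= conj_real in e2.
  rewrite -/p normcM' normc_real ?(ltW t0) // -(mulrA t%:C) mulJc in e2.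
  rewrite -rmorphM -rmorphN Re_real -/np in e2.
  move=> h.
  have hw : 0 <= nrm w by exact: nrm_ge0.
  have h1 : nrm w ^+ 2 <= nrm (w - lam *: k') ^+ 2.
    by rewrite ler_sqr ?nrm_ge0 //; apply: le_trans h.
  rewrite e2 in h1.
  rewrite -/nk in h1.
  have h2 : 0 <= t * (np ^+ 2 * (t * nk ^+ 2 - 2)).
    have -> : t * (np ^+ 2 * (t * nk ^+ 2 - 2)) = (t * np * nk) ^+ 2 + 2 * - (t * np ^+ 2) by ring.
    lra.
  rewrite pmulr_rge0 // in h2.
  have hnp : 0 <= np by exact: normc_ge0.
  nra.
pose z := ((phi w)^*%R / (ip w w)^*%R) *: w.
exists z => x.
have Ky : K (phi w *: x - phi x *: w) by rewrite /K phiB !phiZ mulrC subrr.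
have := orth _ Ky; rewrite (ipBl Hip) !(ipZl Hip) => /eqP; rewrite subr_eq0 => /eqP h.
rewrite (ipZr Hip) fmorph_div /= !conjCK mulrAC h mulfK //.
Qed.

End P2.

Section P3.
Variables (R : realType) (V : lmodType R[i]) (ip : V -> V -> R[i]).
Hypothesis Hip : is_inner_product ip.
Hypothesis Hcomplete : hcomplete ip.
Local Notation nrm := (hnorm ip).
Local Notation normc := Normc.normc.
Local Notation Re := complex.Re.
Local Notation Im := complex.Im.

Definition linop (T : V -> V) := forall (a : R[i]) x y, T (a *: x + y) = a *: T x + T y.
Definition bndop (T : V -> V) (M : R) := forall x, nrm (T x) <= M * nrm x.

Section Lin.
Variable T : V -> V.
Hypothesis HT : linop T.
Lemma lin0 : T 0 = 0.
Proof.
have := HT 1 0 0; rewrite scaler0 addr0 scale1r => h.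
by have := congr1 (fun t => t - T 0) h; rewrite subrr addrK.
Qed.
Lemma linZ a x : T (a *: x) = a *: T x.
Proof. by rewrite -[a *: x]addr0 HT lin0 addr0. Qed.
Lemma linD x y : T (x + y) = T x + T y.
Proof. by have := HT 1 x y; rewrite !scale1r. Qed.
Lemma linN x : T (- x) = - T x.
Proof. by rewrite -scaleN1r linZ scaleN1r. Qed.
Lemma linB x y : T (x - y) = T x - T y.
Proof. by rewrite linD linN. Qed.
End Lin.

Lemma bnd_abs T M : bndop T M -> bndop T `|M|.
Proof.
move=> h x; apply: le_trans (h x) _; apply: ler_wpM2r; [exact: nrm_ge0|exact: ler_norm].
Qed.

Lemma bounded_opP T : bounded_op ip T -> linop T /\ exists2 M, 0 <= M & bndop T M.
Proof. by case=> l [M hM]; split => //; exists `|M| => //; exact: bnd_abs. Qed.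

Lemma adjoint_exists T : bounded_op ip T -> exists S, is_adjoint ip T S.
Proof.
case/bounded_opP => lT [M M0 hM].
have ex y : exists z, forall x, ip (T x) y = ip x z.
  apply: (@riesz _ _ _ Hip Hcomplete _ (M * nrm y)).
    by move=> a x x'; rewrite lT (ipDl Hip) (ipZl Hip).
  move=> x; apply: le_trans (CS Hip _ _) _.
  rewrite mulrAC; apply: ler_wpM2r; [exact: nrm_ge0|exact: hM].
case: (boolp.choice ex) => S hS; exists S => x y; exact: hS.
Qed.

Lemma adj_sym T S : is_adjoint ip T S -> is_adjoint ip S T.
Proof. by move=> h x y; rewrite (ipC Hip) -h -(ipC Hip). Qed.

Lemma adj_unique T S1 S2 : is_adjoint ip T S1 -> is_adjoint ip T S2 -> S1 = S2.
Proof.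
move=> h1 h2; apply: boolp.funext => y; apply: (ip_eqr Hip) => x.
by rewrite -h1 -h2.
Qed.

Lemma adjE T S : is_adjoint ip T S -> adj ip T = S.
Proof.
move=> h; apply: (adj_unique _ h); rewrite /adj.
by apply: epsilon_spec; exists S.
Qed.

Lemma adj_spec T : bounded_op ip T -> is_adjoint ip T (adj ip T).
Proof. by move=> /adjoint_exists [S hS]; rewrite (adjE hS). Qed.

Lemma adj_lin T S : is_adjoint ip T S -> linop S.
Proof.
move=> h a x y; apply: (ip_eqr Hip) => z.
by rewrite -h (ipDr Hip) (ipZr Hip) (ipDr Hip) (ipZr Hip) !h.
Qed.

Lemma adj_bnd T S M : 0 <= M -> is_adjoint ip T S -> bndop T M -> bndop S M.
Proof.
move=> M0 h hM y.
have e := h (S y) y; rewrite (ip_self Hip) in e.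
have h1 : nrm (S y) ^+ 2 <= M * nrm (S y) * nrm y.
  rewrite -(normc_real (sqr_ge0 (nrm (S y)))) -e.
  apply: le_trans (CS Hip _ _) _; apply: ler_wpM2r; [exact: nrm_ge0|exact: hM].
have := nrm_ge0 ip (S y); have := nrm_ge0 ip y; move: h1.
set a := nrm (S y); set b := nrm y => h1 h2 h3.
have [->|a0] := eqVneq a 0; first by rewrite mulr_ge0.
have a0' : 0 < a by rewrite lt_def a0 h3.
rewrite -mulrA [M * _]mulrCA expr2 ler_pM2l // in h1.
Qed.

Lemma adj_bounded T S : is_adjoint ip T S -> bounded_op ip T -> bounded_op ip S.
Proof.
move=> h /bounded_opP [_ [M M0 hM]]; split; first exact: adj_lin h.
by exists M; exact: adj_bnd h hM.
Qed.

Lemma adj_comp T T' S S' : is_adjoint ip T T' -> is_adjoint ip S S' ->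
  is_adjoint ip (T \o S) (S' \o T').
Proof. by move=> h1 h2 x y /=; rewrite h1 h2. Qed.

Lemma adj_add T T' S S' : is_adjoint ip T T' -> is_adjoint ip S S' ->
  is_adjoint ip (opadd T S) (opadd T' S').
Proof. by move=> h1 h2 x y; rewrite /opadd (ipDl Hip) (ipDr Hip) h1 h2. Qed.

Lemma adj_scale a T T' : is_adjoint ip T T' ->
  is_adjoint ip (opscale a T) (opscale a^*%R T').
Proof. by move=> h x y; rewrite /opscale (ipZl Hip) (ipZr Hip) conjCK h. Qed.

Lemma adj_sub T T' S S' : is_adjoint ip T T' -> is_adjoint ip S S' ->
  is_adjoint ip (opsub T S) (opsub T' S').
Proof. by move=> h1 h2 x y; rewrite /opsub (ipBl Hip) (ipBr Hip) h1 h2. Qed.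

Lemma bnd_comp T S : bounded_op ip T -> bounded_op ip S -> bounded_op ip (T \o S).
Proof.
case/bounded_opP => lT [M M0 hM]; case/bounded_opP => lS [N N0 hN].
split; first by move=> a x y /=; rewrite lS lT.
exists (M * N) => x /=; apply: le_trans (hM _) _.
by rewrite -mulrA ler_wpM2l.
Qed.

Lemma bnd_add T S : bounded_op ip T -> bounded_op ip S -> bounded_op ip (opadd T S).
Proof.
case/bounded_opP => lT [M M0 hM]; case/bounded_opP => lS [N N0 hN].
split; first by move=> a x y; rewrite /opadd lS lT scalerDr addrACA.
exists (M + N) => x; rewrite /opadd; apply: le_trans (nrm_triangle Hip _ _) _.
by rewrite mulrDl lerD.
Qed.

Lemma bnd_scale a T : bounded_op ip T -> bounded_op ip (opscale a T).
Proof.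
case/bounded_opP => lT [M M0 hM].
split; first by move=> b x y; rewrite /opscale lT scalerDr !scalerA mulrC.
exists (normc a * M) => x; rewrite /opscale (nrmZ Hip) -mulrA.
by apply: ler_wpM2l; [exact: normc_ge0|exact: hM].
Qed.

Lemma opsubE (T S : V -> V) : opsub T S = opadd T (opscale (-1) S).
Proof. by apply: boolp.funext => x; rewrite /opsub /opadd /opscale scaleN1r. Qed.

Lemma bnd_sub T S : bounded_op ip T -> bounded_op ip S -> bounded_op ip (opsub T S).
Proof. by move=> h1 h2; rewrite opsubE; apply: bnd_add => //; apply: bnd_scale. Qed.

Lemma bnd_id : @bounded_op R V ip (fun x : V => x).
Proof. by split => //; exists 1 => x; rewrite mul1r. Qed.

End P3.

Section P4.
Variables (R : realType) (V : lmodType R[i]) (ip : V -> V -> R[i]).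
Hypothesis Hip : is_inner_product ip.
Local Notation nrm := (hnorm ip).
Local Notation normc := Normc.normc.

Lemma lin_sum (T : V -> V) (hT : linop T) n (f : 'I_n -> V) :
  T (\sum_(i < n) f i) = \sum_(i < n) T (f i).
Proof. exact: (big_morph T (linD hT) (lin0 hT)). Qed.

Lemma nrm_sum n (f : 'I_n -> V) : nrm (\sum_(i < n) f i) <= \sum_(i < n) nrm (f i).
Proof.
elim/big_ind2: _ => //; first by rewrite (nrm0 Hip).
move=> x1 x2 y1 y2 h1 h2; apply: le_trans (nrm_triangle Hip _ _) _; exact: lerD.
Qed.

Lemma ip_suml n (f : 'I_n -> V) y : ip (\sum_(i < n) f i) y = \sum_(i < n) ip (f i) y.
Proof. exact: (big_morph (fun v => ip v y) (fun a b => ipDl Hip a b y) (ip0l Hip y)). Qed.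

Lemma ip_sumr n (f : 'I_n -> V) y : ip y (\sum_(i < n) f i) = \sum_(i < n) ip y (f i).
Proof. exact: (big_morph (fun v => ip y v) (fun a b => ipDr Hip y a b) (ip0r Hip y)). Qed.

Variable C : V -> V.
Hypothesis hC : linop C.
Hypothesis hCa : is_adjoint ip C C.
Hypothesis hCb : bndop ip C 1.

Lemma iter_lin k : linop (iter k C).
Proof. rewrite /linop; elim: k => [|k IH] a x y //=; by rewrite IH hC. Qed.

Lemma iter_bnd k x : nrm (iter k C x) <= nrm x.
Proof.
elim: k => [//|k IH] /=; apply: le_trans (hCb _) _; by rewrite mul1r.
Qed.

Lemma iter_adj k : is_adjoint ip (iter k C) (iter k C).
Proof. rewrite /is_adjoint; elim: k => [|k IH] x y //=; by rewrite hCa IH -iterSr. Qed.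

Lemma iter_comm (B : V -> V) k x : (forall x, B (C x) = C (B x)) ->
  B (iter k C x) = iter k C (B x).
Proof. move=> h; elim: k => [//|k IH] /=; by rewrite h IH. Qed.

Definition Pq (q : {poly R}) (x : V) : V :=
  \sum_(k < size q) (q`_k)%:C *: iter k C x.

Lemma Pq_wide n (q : {poly R}) x : (size q <= n)%N ->
  Pq q x = \sum_(k < n) (q`_k)%:C *: iter k C x.
Proof.
move=> hn; rewrite /Pq -(subnKC hn) big_split_ord /=.
rewrite [X in _ = _ + X]big1 ?addr0 // => i _.
by rewrite /= nth_default ?leq_addr // rmorph0 scale0r.
Qed.

Lemma PqD (q1 q2 : {poly R}) x : Pq (q1 + q2) x = Pq q1 x + Pq q2 x.
Proof.
rewrite !(@Pq_wide (maxn (size q1) (size q2))) ?leq_maxl ?leq_maxr //;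
  last by apply: leq_trans (size_polyD _ _) _.
rewrite -big_split /=; apply: eq_bigr => i _.
by rewrite coefD rmorphD scalerDl.
Qed.

Lemma PqZ (a : R) (q : {poly R}) x : Pq (a *: q) x = a%:C *: Pq q x.
Proof.
rewrite !(@Pq_wide (size q)) ?size_scale_leq // scaler_sumr.
by apply: eq_bigr => i _; rewrite coefZ rmorphM scalerA.
Qed.

Lemma Pq0 x : Pq 0 x = 0.
Proof. by rewrite /Pq size_poly0 big_ord0. Qed.

Lemma PqC c x : Pq c%:P x = c%:C *: x.
Proof.
rewrite (@Pq_wide 1) ?size_polyC ?leq_b1 // big_ord1 /=.
by rewrite coefC.
Qed.

Lemma PqMX (q : {poly R}) x : Pq (q * 'X) x = Pq q (C x).
Proof.
rewrite (@Pq_wide (size q).+1); last first.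
  by apply: leq_trans (size_polyMleq _ _) _; rewrite size_polyX addn2.
rewrite big_ord_recl /= coefMX eqxx rmorph0 scale0r add0r /Pq.
apply: eq_bigr => i _; rewrite coefMX /= -iterSr //.
Qed.

Lemma Pq_lin (q : {poly R}) : linop (Pq q).
Proof.
move=> a x y; rewrite /Pq scaler_sumr -big_split; apply: eq_bigr => i _ /=.
by rewrite (iter_lin i) scalerDr !scalerA mulrC.
Qed.

Lemma Pq_comm (B : V -> V) (hB : linop B) (hBC : forall x, B (C x) = C (B x))
  (q : {poly R}) x : B (Pq q x) = Pq q (B x).
Proof.
rewrite /Pq (lin_sum hB); apply: eq_bigr => i _.
by rewrite (linZ hB) iter_comm.
Qed.

Lemma PqM (q1 q2 : {poly R}) x : Pq (q1 * q2) x = Pq q1 (Pq q2 x).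
Proof.
elim/poly_ind: q1 x => [|p c IH] x; first by rewrite mul0r !Pq0.
rewrite mulrDl mulrAC !PqD !PqMX IH mul_polyC PqZ PqC.
by rewrite (@Pq_comm C hC).
Qed.

Lemma Pq_adj (q : {poly R}) : is_adjoint ip (Pq q) (Pq q).
Proof.
move=> x y; rewrite /Pq ip_suml ip_sumr; apply: eq_bigr => i _.
by rewrite (ipZl Hip) (ipZr Hip) conj_real iter_adj.
Qed.

Definition nn (q : {poly R}) := forall j, 0 <= q`_j.

Lemma Pq_bnd (q : {poly R}) x : nn q -> nrm (Pq q x) <= q.[1] * nrm x.
Proof.
move=> hq; apply: le_trans (nrm_sum _) _.
rewrite horner_coef mulr_suml; apply: ler_sum => i _.
rewrite (nrmZ Hip) normc_real // expr1n mulr1.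
by apply: ler_wpM2l => //; exact: iter_bnd.
Qed.

End P4.

Section Qseq.
Variable R : realType.

Fixpoint Qs (k : nat) : {poly R} :=
  if k is k'.+1 then (2^-1)%:P * ('X + Qs k' * Qs k') else 0.

Lemma nn0 : nn (0 : {poly R}).
Proof. by move=> j; rewrite coef0. Qed.
Lemma nnD (p q : {poly R}) : nn p -> nn q -> nn (p + q).
Proof. by move=> hp hq j; rewrite coefD addr_ge0. Qed.
Lemma nnM (p q : {poly R}) : nn p -> nn q -> nn (p * q).
Proof.
move=> hp hq j; rewrite coefM; apply: sumr_ge0 => i _; exact: mulr_ge0.
Qed.
Lemma nnX : nn ('X : {poly R}).
Proof. by move=> j; rewrite coefX; case: (_ == _). Qed.
Lemma nnC (c : R) : 0 <= c -> nn c%:P.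
Proof. by move=> c0 j; rewrite coefC; case: (_ == _). Qed.

Lemma nn_horner1 (p : {poly R}) : nn p -> 0 <= p.[1].
Proof.
move=> hp; rewrite horner_coef; apply: sumr_ge0 => i _.
by rewrite expr1n mulr1.
Qed.

Lemma nnQ k : nn (Qs k).
Proof.
elim: k => [|k IH] /=; first exact: nn0.
apply: nnM; first by apply: nnC; rewrite invr_ge0.
by apply: nnD; [exact: nnX | exact: nnM].
Qed.

Lemma nnQS k : nn (Qs k.+1 - Qs k).
Proof.
elim: k => [|k IH].
  rewrite /= !mul0r addr0 subr0; apply: nnM; first by apply: nnC; rewrite invr_ge0.
  exact: nnX.
have -> : Qs k.+2 - Qs k.+1 = (2^-1)%:P * ((Qs k.+1 - Qs k) * (Qs k.+1 + Qs k)).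
  have gen (a b h X : {poly R}) : a = h * (X + b * b) ->
      h * (X + a * a) - a = h * ((a - b) * (a + b)) by move=> ->; ring.
  exact: gen.
apply: nnM; first by apply: nnC; rewrite invr_ge0.
by apply: nnM => //; apply: nnD; exact: nnQ.
Qed.

Lemma nnQle k m : (k <= m)%N -> nn (Qs m - Qs k).
Proof.
elim: m => [|m IH] hkm.
  by move: hkm; rewrite leqn0 => /eqP ->; rewrite subrr; exact: nn0.
case: (eqVneq k m.+1) => [->|ne]; first by rewrite subrr; exact: nn0.
have hkm' : (k <= m)%N by rewrite -ltnS ltn_neqAle ne hkm.
have -> : Qs m.+1 - Qs k = (Qs m.+1 - Qs m) + (Qs m - Qs k) by rewrite addrA subrK.
apply: nnD; [exact: nnQS | exact: IH].
Qed.

Lemma hQ1 k : 0 <= (Qs k).[1] <= 1.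
Proof.
elim: k => [|k IH]; first by rewrite /= horner0 lexx ler01.
rewrite /= !hornerE; move/andP: IH => [h1 h2].
apply/andP; split; nra.
Qed.

Lemma s_mono k m : (k <= m)%N -> (Qs k).[1] <= (Qs m).[1].
Proof.
move=> hkm; have := nn_horner1 (nnQle hkm).
by rewrite hornerD hornerN subr_ge0.
Qed.

Lemma s_cauchy (e : R) : 0 < e -> exists M, forall k m, (M <= k)%N -> (k <= m)%N ->
  (Qs m).[1] - (Qs k).[1] < e.
Proof.
move=> e0.
pose S : set R := range (fun k => (Qs k).[1]).
have hs : has_sup S.
  split; first by exists (Qs 0).[1]; exists 0%N.
  by exists 1 => _ [k _ <-]; case/andP: (hQ1 k).
have [_ [M _ <-] hM] := sup_adherent e0 hs.
exists M => k m hk hm.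
have h1 : (Qs m).[1] <= sup S by apply: sup_upper_bound => //; exists m.
have h2 := s_mono hk.
lra.
Qed.

End Qseq.
Arguments Qs {R}.
Arguments nnQ {R} k. Arguments nnQS {R} k. Arguments hQ1 {R} k.
Arguments nnQle {R} [k m]. Arguments s_mono {R} [k m]. Arguments s_cauchy {R} [e].

Section Sqrt.
Variables (R : realType) (V : lmodType R[i]) (ip : V -> V -> R[i]).
Hypothesis Hip : is_inner_product ip.
Hypothesis Hcomplete : hcomplete ip.
Local Notation nrm := (hnorm ip).
Local Notation normc := Normc.normc.

Lemma cvgH_cmp (u v : nat -> V) l m c : 0 <= c -> cvgH ip u l ->
  (forall n, nrm (v n - m) <= c * nrm (u n - l)) -> cvgH ip v m.
Proof.
move=> c0 hu h e e0.
have c1 : 0 < c + 1 by lra.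
have [M hM] := hu (e / (c + 1)) (divr_gt0 e0 c1).
exists M => n hn; have := hM n hn; rewrite ltr_pdivlMr // => h1.
have h2 := h n.
have h3 : c * nrm (u n - l) <= (c + 1) * nrm (u n - l).
  by apply: ler_wpM2r; [exact: nrm_ge0 | lra].
move: h1 h2 h3; rewrite mulrC; set a := _ * nrm _; set b := _ * nrm _; lra.
Qed.

Lemma cvgH_eq (u v : nat -> V) l : (forall n, u n = v n) -> cvgH ip u l -> cvgH ip v l.
Proof.
move=> h hu; apply: (cvgH_cmp ler01 hu) => n; by rewrite h mul1r.
Qed.

Lemma cvgH_const l : cvgH ip (fun _ => l) l.
Proof. by move=> e e0; exists 0%N => n _; rewrite subrr (nrm0 Hip). Qed.

Lemma cvgH_shift u l : cvgH ip u l -> cvgH ip (fun n => u n.+1) l.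
Proof. by move=> h e e0; have [M hM] := h e e0; exists M => n hn; apply: hM; exact: leqW. Qed.

Lemma cvgHD u v l m : cvgH ip u l -> cvgH ip v m -> cvgH ip (fun n => u n + v n) (l + m).
Proof.
move=> hu hv e e0.
have e2 : 0 < e / 2 by rewrite divr_gt0.
have [M1 h1] := hu _ e2; have [M2 h2] := hv _ e2.
exists (maxn M1 M2) => n hn.
have := h1 n (leq_trans (leq_maxl _ _) hn); have := h2 n (leq_trans (leq_maxr _ _) hn).
have := nrm_triangle Hip (u n - l) (v n - m).
have -> : u n - l + (v n - m) = u n + v n - (l + m) by rewrite opprD addrACA.
lra.
Qed.

Lemma cvgHZ (a : R[i]) u l : cvgH ip u l -> cvgH ip (fun n => a *: u n) (a *: l).
Proof.
move=> hu; apply: (cvgH_cmp (normc_ge0 a) hu) => n.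
by rewrite -scalerBr (nrmZ Hip).
Qed.

Lemma cvgH_op (T : V -> V) M u l : linop T -> bndop ip T M -> 0 <= M -> cvgH ip u l ->
  cvgH ip (fun n => T (u n)) (T l).
Proof.
move=> hT hM M0 hu; apply: (cvgH_cmp M0 hu) => n.
by rewrite -(linB hT); exact: hM.
Qed.

Lemma small_mul (a c : R) : 0 <= c -> (forall e, 0 < e -> a <= e * c) -> a <= 0.
Proof.
move=> c0 h; apply: small_le0 => e e0.
have c1 : 0 < c + 1 by lra.
have := h (e / (c + 1)) (divr_gt0 e0 c1).
have : e / (c + 1) * c <= e.
  rewrite mulrAC ler_pdivrMr //; apply: ler_wpM2l; lra.
lra.
Qed.

Variable A : V -> V.
Hypothesis hA : linop A.
Hypothesis hAa : is_adjoint ip A A.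
Hypothesis hAb : bndop ip A 1.

Definition Cop := fun x => A (A x).

Lemma hC : linop Cop.
Proof. by move=> a x y; rewrite /Cop !hA. Qed.

Lemma hCa : is_adjoint ip Cop Cop.
Proof. exact: (adj_comp hAa hAa). Qed.

Lemma hCb : bndop ip Cop 1.
Proof.
move=> x; rewrite /Cop; apply: le_trans (hAb _) _; rewrite !mul1r.
by have := hAb x; rewrite mul1r.
Qed.

Local Notation Pk k := (Pq Cop (Qs k)).

Lemma Pk_bnd k x : nrm (Pk k x) <= nrm x.
Proof.
apply: le_trans (Pq_bnd Hip hCb x (nnQ k)) _.
have /andP[h1 h2] := @hQ1 R k; rewrite -[leRHS]mul1r.
by apply: ler_wpM2r => //; exact: nrm_ge0.
Qed.

Lemma PqB (q1 q2 : {poly R}) x : Pq Cop (q1 - q2) x = Pq Cop q1 x - Pq Cop q2 x.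
Proof. by rewrite PqD; congr (_ + _); rewrite -[- q2]scaleN1r PqZ rmorphN rmorph1 scaleN1r. Qed.

Lemma Pk_diff k m x : (k <= m)%N ->
  nrm (Pk m x - Pk k x) <= ((Qs m).[1] - (Qs k).[1]) * nrm x.
Proof.
move=> hkm; rewrite -PqB.
by have := Pq_bnd Hip hCb x (nnQle hkm); rewrite hornerD hornerN.
Qed.

Lemma Pk_cauchy x : cauchyH ip (fun k => Pk k x).
Proof.
move=> e e0.
have c1 : 0 < nrm x + 1 by have := nrm_ge0 ip x; lra.
have [M hM] := s_cauchy (divr_gt0 e0 c1).
have key k m : (M <= k)%N -> (k <= m)%N -> nrm (Pk m x - Pk k x) < e.
  move=> hk hm; have := hM k m hk hm; rewrite ltr_pdivlMr // => h1.
  apply: le_lt_trans (Pk_diff x hm) _.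
  have h2 := nrm_ge0 ip x.
  have h3 : 0 <= (Qs (R:=R) m).[1] - (Qs k).[1] by rewrite subr_ge0; apply: s_mono.
  move: h1; set s := _ - _ => h1.
  have : s * nrm x <= s * (nrm x + 1) by apply: ler_wpM2l => //; lra.
  lra.
exists M => m n hm hn.
case: (leqP n m) => hnm; first exact: key.
by rewrite (nrmB Hip); apply: key => //; exact: ltnW.
Qed.

Lemma Y_ex : exists Y : V -> V, forall x, cvgH ip (fun k => Pk k x) (Y x).
Proof.
have h x : exists l, cvgH ip (fun k => Pk k x) l.
exact: (cauchy_cvgH Hcomplete (Pk_cauchy x)).
by case: (boolp.choice h) => Y hY; exists Y.
Qed.

End Sqrt.

Section P6.
Variables (R : realType) (V : lmodType R[i]) (ip : V -> V -> R[i]).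
Hypothesis Hip : is_inner_product ip.
Hypothesis Hcomplete : hcomplete ip.
Local Notation nrm := (hnorm ip).
Local Notation normc := Normc.normc.
Variable A : V -> V.
Hypothesis hA : linop A.
Hypothesis hAa : is_adjoint ip A A.
Hypothesis hAb : bndop ip A 1.
Local Notation C := (Cop A).
Let hC' : linop C := hC hA.
Let hCa' : is_adjoint ip C C := hCa hAa.
Let hCb' : bndop ip C 1 := hCb hAb.
Local Notation Pk k := (Pq C (Qs k)).

Lemma sqrt_ex : exists S : V -> V, [/\ linop S, bndop ip S 2, is_adjoint ip S S,
  (forall x, A (S x) = S (A x)) & (forall x, S (S x) = x - A (A x))].
Proof.
have [Y hY] := Y_ex Hip Hcomplete hAb.
have Ylin : linop Y.
  move=> a x y; apply: (cvg_uniqueH Hip (hY (a *: x + y))).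
  have hh := cvgHD Hip (cvgHZ Hip a (hY x)) (hY y).
  apply: cvgH_eq hh => n /=.
  by rewrite (Pq_lin hC').
have Yb : bndop ip Y 1.
  move=> x; rewrite mul1r; apply: le_eps => e e0.
  have [M hM] := hY x e e0; have := hM M (leqnn M); have := Pk_bnd Hip hAb M x.
  have := nrm_triangle Hip (Y x - Pk M x) (Pk M x); rewrite subrK (nrmB Hip).
  lra.
have Yadj : is_adjoint ip Y Y.
  move=> x y; apply/eqP; rewrite -subr_eq0; apply/eqP/normc_eq0/le_anti.
  rewrite normc_ge0 andbT.
  have c0 : 0 <= nrm x + nrm y by rewrite addr_ge0 ?nrm_ge0.
  apply: (small_mul c0) => e e0.
  have [M1 h1] := hY x e e0; have [M2 h2] := hY y e e0.
  have := h1 (maxn M1 M2) (leq_maxl _ _); have := h2 (maxn M1 M2) (leq_maxr _ _).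
  set n := maxn M1 M2 => h3 h4.
  have eq : ip (Y x) y - ip x (Y y) = ip (Y x - Pk n x) y + ip x (Pk n y - Y y).
    by rewrite (ipBl Hip) (ipBr Hip) (Pq_adj Hip hCa') addrA subrK.
  rewrite eq; apply: le_trans (normcD _ _) _.
  have b1 := CS Hip (Y x - Pk n x) y; have b2 := CS Hip x (Pk n y - Y y).
  rewrite (nrmB Hip) in b1.
  have := nrm_ge0 ip x; have := nrm_ge0 ip y.
  move: b1 b2 h3 h4; set a1 := nrm (Pk n x - Y x); set a2 := nrm (Pk n y - Y y).
  move=> b1 b2 h3 h4 hy hx.
  have : a1 * nrm y <= e * nrm y by apply: ler_wpM2r => //; exact: ltW.
  have : nrm x * a2 <= nrm x * e by apply: ler_wpM2l => //; exact: ltW.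
  lra.
have Ycomm x : A (Y x) = Y (A x).
  apply: (cvg_uniqueH Hip (cvgH_op hA hAb ler01 (hY x))).
  apply: cvgH_eq (hY (A x)) => n.
  by rewrite (Pq_comm hA).
have h2c : (2%:R : R[i]) * (2^-1 : R)%:C = 1.
  by rewrite fmorphV rmorph_nat mulfV // pnatr_eq0.
have Ysq x : Y (Y x) = Y x + Y x - C x.
  have h1 := cvgH_shift (hY x).
  have h2 : cvgH ip (fun n => Pk n (Pk n x)) (Y (Y x)).
    move=> e e0; have e2 : 0 < e / 2 by rewrite divr_gt0.
    have [M1 hM1] := hY x _ e2; have [M2 hM2] := hY (Y x) _ e2.
    exists (maxn M1 M2) => n hn.
    have := hM1 n (leq_trans (leq_maxl _ _) hn); have := hM2 n (leq_trans (leq_maxr _ _) hn).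
    have eq : Pk n (Pk n x) - Y (Y x) = Pk n (Pk n x - Y x) + (Pk n (Y x) - Y (Y x)).
      by rewrite (linB (Pq_lin hC' _)) addrA subrK.
    have := nrm_triangle Hip (Pk n (Pk n x - Y x)) (Pk n (Y x) - Y (Y x)).
    rewrite -eq; have := Pk_bnd Hip hAb n (Pk n x - Y x).
    lra.
  have h3 : cvgH ip (fun n => Pk n.+1 x) ((2^-1 : R)%:C *: (C x + Y (Y x))).
    apply: cvgH_eq (cvgHZ Hip _ (cvgHD Hip (cvgH_const Hip (C x)) h2)) => n.
    rewrite [Qs n.+1]/= (PqM hC') PqC PqD (PqM hC').
    have PX : Pq C 'X x = C x by rewrite -['X]mul1r PqMX -polyC1 PqC ?rmorph1 scale1r.
    by rewrite PX.
  have e := cvg_uniqueH Hip h1 h3.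
  have := congr1 (fun v => 2%:R *: v) e; rewrite scalerA h2c scale1r => e2.
  by rewrite -mulr2n -scaler_nat e2 [C x + _]addrC addrK.
pose S x := x - Y x.
exists S; split.
- by move=> a x y; rewrite /S Ylin scalerBr opprD addrACA.
- move=> x; rewrite /S; apply: le_trans (nrm_triangle Hip _ _) _.
  rewrite (nrmN Hip); have := Yb x; have := nrm_ge0 ip x; lra.
- by move=> x y; rewrite /S (ipBl Hip) (ipBr Hip) Yadj.
- by move=> x; rewrite /S (linB hA) Ycomm.
- move=> x; rewrite /S (linB Ylin) Ysq.
  by rewrite !opprD !opprK !addrA addrNK subrK.
Qed.

End P6.

Section P7.
Variables (R : realType) (V : lmodType R[i]) (ip : V -> V -> R[i]).
Hypothesis Hip : is_inner_product ip.
Hypothesis Hcomplete : hcomplete ip.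
Local Notation nrm := (hnorm ip).
Local Notation normc := Normc.normc.

Lemma normci : normc ('i%C : R[i]) = 1.
Proof. by rewrite /= expr0n add0r expr1n sqrtr1. Qed.

Lemma conji : ('i%C : R[i])^*%R = - 'i%C.
Proof. by rewrite conjE /=; simpc. Qed.

Lemma ii : ('i%C : R[i]) * 'i%C = -1.
Proof. by rewrite -expr2 sqr_i. Qed.

Lemma unitary_bound (A : V -> V) : linop A -> is_adjoint ip A A -> bndop ip A 1 ->
  exists U1 U2, [/\ unitary ip U1, unitary ip U2 & A = opscale (2^-1) (opadd U1 U2)].
Proof.
move=> hA hAa hAb.
have [S [hS hSb hSa hSA hSS]] := sqrt_ex Hip Hcomplete hA hAa hAb.
pose U1 x := A x + 'i%C *: S x.
pose U2 x := A x - 'i%C *: S x.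
have l1 : linop U1.
  move=> a x y; rewrite /U1 hA hS scalerDr !scalerA mulrC -!scalerA scalerDr.
  by rewrite addrACA.
have l2 : linop U2.
  move=> a x y; rewrite /U2 hA hS scalerDr !scalerA mulrC -!scalerA scalerDr.
  by rewrite scalerN opprD addrACA.
have b1 : bounded_op ip U1.
  split => //; exists 3 => x; rewrite /U1; apply: le_trans (nrm_triangle Hip _ _) _.
  rewrite (nrmZ Hip) normci mul1r; have := hAb x; have := hSb x.
  have := nrm_ge0 ip x; lra.
have b2 : bounded_op ip U2.
  split => //; exists 3 => x; rewrite /U2; apply: le_trans (nrm_triangle Hip _ _) _.
  rewrite (nrmN Hip) (nrmZ Hip) normci mul1r; have := hAb x; have := hSb x.
  have := nrm_ge0 ip x; lra.
have a12 : is_adjoint ip U1 U2.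
  move=> x y; rewrite /U1 /U2 (ipDl Hip) (ipZl Hip) (ipBr Hip) (ipZr Hip) conji.
  by rewrite hAa hSa mulNr opprK.
have e21 x : U2 (U1 x) = x.
  rewrite /U1 /U2 (linD hA) (linZ hA) (linD hS) (linZ hS) hSA scalerDr scalerA ii.
  by rewrite scaleN1r hSS opprD opprK addrA addrK addrC subrK.
have e12 x : U1 (U2 x) = x.
  rewrite /U1 /U2 (linB hA) (linZ hA) (linB hS) (linZ hS) hSA scalerBr scalerA ii.
  by rewrite scaleN1r hSS opprK addrA subrK addrC subrK.
have adj1 : adj ip U1 = U2 by exact: (adjE Hip a12).
have adj2 : adj ip U2 = U1 by exact: (adjE Hip (adj_sym Hip a12)).
exists U1, U2; split.
- split => //; rewrite adj1; split; apply: boolp.funext => x /=; [exact: e21 | exact: e12].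
- split => //; rewrite adj2; split; apply: boolp.funext => x /=; [exact: e12 | exact: e21].
- apply: boolp.funext => x; rewrite /opscale /opadd /U1 /U2.
  rewrite addrACA subrr addr0 -mulr2n -(scaler_nat 2 (A x)) scalerA mulVf ?scale1r //.
Qed.

End P7.

Section P8.
Variables (R : realType) (V : lmodType R[i]) (ip : V -> V -> R[i]).
Hypothesis Hip : is_inner_product ip.
Hypothesis Hcomplete : hcomplete ip.
Local Notation nrm := (hnorm ip).
Local Notation normc := Normc.normc.

Lemma opnorm_bnd T : bounded_op ip T -> opnorm ip T <= 1 -> bndop ip T 1.
Proof.
move=> hT h1; case/bounded_opP: (hT) => lT [M M0 hM].
move: h1; rewrite /opnorm; set E := (X in sup X) => h1.
have hs : has_sup E.
  split; first by exists (nrm (T 0)); exists 0 => //=; rewrite (nrm0 Hip) ler01.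
  exists M => _ [x hx <-]; apply: le_trans (hM x) _.
  by rewrite -[leRHS]mulr1 ler_wpM2l.
move=> x; rewrite mul1r.
have [/(nrm_eq0 Hip) ->|nx] := eqVneq (nrm x) 0; first by rewrite (lin0 lT).
have nx0 : 0 < nrm x by rewrite lt_def nx nrm_ge0.
pose u := ((nrm x)^-1)%:C *: x.
have nu : nrm u = 1.
  by rewrite /u (nrmZ Hip) normc_real ?invr_ge0 ?(ltW nx0) // mulVf.
have hu : nrm (T u) <= 1.
  apply: le_trans h1; apply: sup_upper_bound => //; exists u => //=.
  by rewrite nu.
move: hu; rewrite /u (linZ lT) (nrmZ Hip) normc_real ?invr_ge0 ?(ltW nx0) //.
by rewrite mulrC ler_pdivrMr // mul1r.
Qed.

Variable N : (V -> V) -> R.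
Hypothesis HN : algebra_norm ip N.
Hypothesis HNsa : selfadjoint_norm ip N.

Lemma N_ge0 T : bounded_op ip T -> 0 <= N T.
Proof. by case: HN => -[h _ _ _] _; exact: h. Qed.
Lemma N_scale a T : bounded_op ip T -> N (opscale a T) = normc a * N T.
Proof. by case: HN => -[_ _ h _] _; exact: h. Qed.
Lemma N_add T S : bounded_op ip T -> bounded_op ip S -> N (opadd T S) <= N T + N S.
Proof. by case: HN => -[_ _ _ h] _; exact: h. Qed.
Lemma N_mul T S : bounded_op ip T -> bounded_op ip S -> N (T \o S) <= N T * N S.
Proof. by case: HN => _ h; exact: h. Qed.
Lemma N_def T : bounded_op ip T -> N T = 0 -> T = (fun _ => 0).
Proof. by case: HN => -[_ h _ _] _; exact: h. Qed.

Lemma normc_half : normc ((2 : R[i])^-1) = 2^-1.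
Proof.
have n2 : normc (2%:R : R[i]) = 2 by have := @normcMn R 1 2; rewrite Normc.normc1.
by rewrite Normc.normcV n2.
Qed.

Lemma N_half_add T S : bounded_op ip T -> bounded_op ip S ->
  N (opscale (2^-1) (opadd T S)) <= 2^-1 * (N T + N S).
Proof.
move=> hT hS; rewrite N_scale ?normc_half; last exact: (bnd_add Hip hT hS).
by apply: ler_wpM2l; [rewrite invr_ge0 | exact: N_add].
Qed.

Lemma re_bound (r : R) (hr : forall U, unitary ip U -> N U <= r) X X' :
  bounded_op ip X -> is_adjoint ip X X' -> bndop ip X 1 ->
  N (opscale (2^-1) (opadd X X')) <= r.
Proof.
move=> hX hXa hXb.
have hX' := adj_bounded Hip hXa hX.
have bX' := adj_bnd Hip ler01 hXa hXb.
set A := opscale _ _.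
have bA : bounded_op ip A := bnd_scale Hip _ (bnd_add Hip hX hX').
have aA : is_adjoint ip A A.
  have := adj_scale Hip (2^-1) (adj_add Hip hXa (adj_sym Hip hXa)).
  rewrite fmorphV rmorph_nat.
  have -> : opadd X' X = opadd X X'.
    by apply: boolp.funext => x; rewrite /opadd addrC.
  by [].
have bA1 : bndop ip A 1.
  move=> x; rewrite /A /opscale /opadd (nrmZ Hip) normc_half mul1r.
  have := nrm_triangle Hip (X x) (X' x); have := hXb x; have := bX' x; lra.
have [U1 [U2 [u1 u2 eA]]] := unitary_bound Hip Hcomplete (bounded_opP bA).1 aA bA1.
rewrite eA; apply: le_trans (N_half_add u1.1 u2.1) _.
have := hr _ u1; have := hr _ u2; lra.
Qed.

Lemma NT_bound (r : R) (hr : forall U, unitary ip U -> N U <= r) T :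
  bounded_op ip T -> bndop ip T 1 -> N T <= 2 * r.
Proof.
move=> hT hT1.
have hTa := adj_spec Hip Hcomplete hT; set T' := adj ip T in hTa *.
have hT' := adj_bounded Hip hTa hT.
pose X2 := opscale (- 'i%C) T. pose X2' := opscale 'i%C T'.
have hX2 : bounded_op ip X2 := bnd_scale Hip _ hT.
have hX2' : bounded_op ip X2' := bnd_scale Hip _ hT'.
have aX2 : is_adjoint ip X2 X2'.
  by have := adj_scale Hip (- 'i%C) hTa; rewrite rmorphN /= conji opprK.
have bX2 : bndop ip X2 1.
  by move=> x; rewrite /X2 /opscale (nrmZ Hip) normcN' normci mul1r; exact: hT1.
have n1 := re_bound hr hT hTa hT1.
have n2 := re_bound hr hX2 aX2 bX2.
have c1 : ('i%C : R[i]) * 2^-1 * - 'i%C = 2^-1 by rewrite mulrN mulrAC ii mulN1r opprK.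
have c2 : ('i%C : R[i]) * 2^-1 * 'i%C = - 2^-1 by rewrite mulrAC ii mulN1r.
have eT : T = opadd (opscale (2^-1) (opadd T T')) (opscale 'i%C (opscale (2^-1) (opadd X2 X2'))).
  apply: boolp.funext => x; rewrite /opadd /opscale /X2 /X2' /opscale.
  rewrite scalerA !scalerDr !scalerA c1 c2 scaleNr.
  have h2 : (2^-1 : R[i]) * 2%:R = 1 by rewrite mulVf // pnatr_eq0.
  rewrite mulr_natr in h2.
  by rewrite addrACA subrr addr0 -scalerDl -mulr2n h2 scale1r.
have b1 : bounded_op ip (opscale (2^-1) (opadd T T')) := bnd_scale Hip _ (bnd_add Hip hT hT').
have b2 : bounded_op ip (opscale (2^-1) (opadd X2 X2')) := bnd_scale Hip _ (bnd_add Hip hX2 hX2').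
rewrite eT; apply: le_trans (N_add b1 (bnd_scale Hip _ b2)) _.
rewrite (N_scale _ b2) normci mul1r; lra.
Qed.

End P8.

Unset Implicit Arguments.
Local Close Scope complex_scope.

Theorem corollary2p7 (R : realType) (V : lmodType R[i]) (ip : V -> V -> R[i])
  (Hip : is_inner_product ip) (Hcomplete : hcomplete ip)
  (N : (V -> V) -> R)
  (HNalg : algebra_norm ip N) (HNsa : selfadjoint_norm ip N)
  (HNwui : weakly_unitarily_invariant ip N)
  (T : V -> V) (HT : bounded_op ip T) (HT1 : opnorm ip T <= 1) :
  (wN ip N (opsub (T \o adj ip T) (adj ip T \o T))
    <= 4%:E * (N T)%:E * sup_unitary ip N)%E.
Proof.
have hTa := adj_spec Hip Hcomplete HT; set T' := adj ip T in hTa *.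
have hT' := adj_bounded Hip hTa HT.
have hTT' := bnd_comp HT hT'; have hT'T := bnd_comp hT' HT.
have hD := bnd_sub Hip hTT' hT'T.
set D := opsub _ _ in hD *.
have NT'eq : N T' = N T := HNsa T HT.
have NT0 : 0 <= N T := N_ge0 HNalg HT.
have ND2 : N D <= 2 * N T ^+ 2.
  rewrite /D opsubE; apply: le_trans (N_add HNalg hTT' (bnd_scale Hip _ hT'T)) _.
  rewrite (N_scale HNalg _ hT'T) normcN' Normc.normc1 mul1r.
  have := N_mul HNalg HT hT'; have := N_mul HNalg hT' HT; rewrite NT'eq expr2.
  lra.
have Nre t : N (ReOp ip (opscale (expi t) D)) <= N D.
  have hX : bounded_op ip (opscale (expi t) D) := bnd_scale Hip _ hD.
  have hXa := adj_spec Hip Hcomplete hX.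
  have hX' := adj_bounded Hip hXa hX.
  rewrite /ReOp; apply: le_trans (N_half_add Hip HNalg hX hX') _.
  rewrite (HNsa _ hX) (N_scale HNalg _ hD).
  have -> : Normc.normc (expi t) = 1 by rewrite /expi /= cos2Dsin2 sqrtr1.
  lra.
have hw : (wN ip N D <= (2 * N T ^+ 2)%:E)%E.
  apply: ge_ereal_sup => _ [t _ <-]; rewrite lee_fin.
  exact: le_trans (Nre t) ND2.
apply: le_trans hw _.
have [NTz|NTn] := eqVneq (N T) 0.
  by rewrite NTz expr0n mulr0 /= mule0 mul0e.
have NTp : 0 < N T by rewrite lt_def NTn NT0.
have uid : unitary ip (fun x : V => x).
  have a : adj ip (fun x : V => x) = (fun x => x) by apply: (adjE Hip).
  by split; [exact: bnd_id | rewrite a].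
have hs : ((N (fun x : V => x))%:E <= sup_unitary ip N)%E.
  by apply: ereal_sup_ubound; exists (fun x : V => x).
case E: (sup_unitary ip N) hs => [r| |] hs.
- have hr : forall U, unitary ip U -> N U <= r.
    move=> U hU; rewrite -lee_fin -E; apply: ereal_sup_ubound; by exists U.
  have := NT_bound Hip Hcomplete HNalg hr HT (opnorm_bnd Hip HT HT1).
  rewrite -!EFinM lee_fin => h; nra.
- by rewrite -EFinM mulry gtr0_sg ?mul1e ?leey // mulr_gt0.
- by move: hs; rewrite leeNy_eq.
Qed.
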